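(* Let $f=(A,B,C)$ and $f'=(A',B',C')$ be two partially reduced imaginary or unusual binary quadratic forms over $\mathbb{F}_q[t]$ of the same discriminant. Then: (1) if $|A|<|C|$ and $|A'|<|C'|$, then $f$ and $f'$ are equivalent if and only if $f=f'$; (2) if $|A|<|C|$ and $|A'|=|C'|$, then $f$ and $f'$ are not equivalent; (3) if $|A|=|C|$ and $|A'|=|C'|$, then $f'=f\circ M$ with $M\in GL_2(\mathbb{F}_q[t])$ if and only if $M=\begin{pmatrix}\alpha&\beta\\ 4u\beta/h& u\alpha\end{pmatrix}$ with $\alpha,\beta\in\mathbb{F}_q$, $\alpha^2-(4/h)\beta^2=1$, and $u=\det M=\pm1$, where, if $B'\neq0$, $u$ is determined by the condition $\mathrm{sgn}(B')\in S$.
   Context: $\mathbb{F}_q$ is a finite field with $\gcd(q,6)=1$. For nonzero $H\in\mathbb{F}_q[t]$, $|H|=q^{\deg H}$, $|0|=0$, and $\mathrm{sgn}(H)$ is its leading coefficient. A binary quadratic form $f=(A,B,C)$ is $Ax^2+Bxy+Cy^2$ over $\mathbb{F}_q[t]$ with discriminant $D=B^2-4AC$; $(f\circ M)(x,y)=f(\alpha x+\beta y,\gamma x+\delta y)$ for $M=\begin{pmatrix}\alpha&\beta\\ \gamma&\delta\end{pmatrix}$; $GL_2(\mathbb{F}_q[t])$ is the set of such $M$ with entries in $\mathbb{F}_q[t]$ and $\det M\in\mathbb{F}_q^*$; $f,g$ are equivalent if $g=f\circ M$ for some $M\in GL_2(\mathbb{F}_q[t])$. $D$ is imaginary if $\deg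 D$ is odd, unusual if $\deg D$ is even and $\mathrm{sgn}(D)$ is a non-square in $\mathbb{F}_q^*$. Fix a primitive root $h$ of $\mathbb{F}_q^*$, $S=\{h^i:0\le i\le(q-3)/2\}$. Standing assumptions: forms are primitive, irreducible, $D\notin\mathbb{F}_q$, and $\mathrm{sgn}(D)\in\{1,h\}$. A form $(A,B,C)$ is partially reduced if $|B|<|A|\le|C|$; if $|A|<|C|$ then $\mathrm{sgn}(A)\in\{1,h\}$, and if $|A|=|C|$ then $\mathrm{sgn}(A)=1$; and $B\ne0$ implies $\mathrm{sgn}(B)\in S$. *)

(* Defs.v *)
From HB Require Import structures.
From mathcomp Require Import all_boot all_order all_algebra all_field.
Set Implicit Arguments. Unset Strict Implicit. Unset Printing Implicit Defensive.
Import Order.TTheory GRing.Theory Num.Theory.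
Local Open Scope ring_scope.

Section Forms.
Variable F : finFieldType.

(* A binary quadratic form (A,B,C) = A x^2 + B x y + C y^2 over F_q[t]. *)
Definition qform := ({poly F} * {poly F} * {poly F})%type.
Definition fA (f : qform) := f.1.1.
Definition fB (f : qform) := f.1.2.
Definition fC (f : qform) := f.2.

Definition absq (H : {poly F}) : nat :=
  if H == 0 then 0%N else (#|F| ^ (size H).-1)%N.

Definition sgn (H : {poly F}) : F := lead_coef H.

Definition disc (f : qform) : {poly F} := fB f ^+ 2 - 4%:R * fA f * fC f.

(* (f o M)(x,y) = f(alpha x + beta y, gamma x + delta y), coefficients written out *)
Definition compose (f : qform) (M : 'M[{poly F}]_2) : qform :=
  let a := M ord0 ord0 in let b := M ord0 ord_max in
  let c := M ord_max ord0 in let d := M ord_max ord_max in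
  let A := fA f in let B := fB f in let C := fC f in
  (A * a ^+ 2 + B * a * c + C * c ^+ 2,
   2%:R * A * a * b + B * (a * d + b * c) + 2%:R * C * c * d,
   A * b ^+ 2 + B * b * d + C * d ^+ 2).

Definition inGL2 (M : 'M[{poly F}]_2) : Prop :=
  exists c : F, c != 0 /\ \det M = c%:P.

Definition equivalent (f g : qform) : Prop :=
  exists M, inGL2 M /\ g = compose f M.

Definition mx2 (a b c d : {poly F}) : 'M[{poly F}]_2 :=
  \matrix_(i < 2, j < 2)
    if (i : nat) == 0%N then (if (j : nat) == 0%N then a else b)
    else (if (j : nat) == 0%N then c else d).

Definition primitive (f : qform) : Prop := coprimep (gcdp (fA f) (fB f)) (fC f).

(* irreducible: does not factor as a product of two linear forms over F_q[t] *)
Definition irreducible_form (f : qform) : Prop :=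
  ~ exists a b c d : {poly F},
      fA f = a * c /\ fB f = a * d + b * c /\ fC f = b * d.

Definition is_square (x : F) : Prop := exists y : F, y ^+ 2 = x.

Definition imaginary (D : {poly F}) : Prop := odd (size D).-1.
Definition unusual (D : {poly F}) : Prop :=
  ~~ odd (size D).-1 /\ sgn D != 0 /\ ~ is_square (sgn D).

Definition primitive_root_F (h : F) : Prop := (#|F|.-1).-primitive_root h.

Definition inS (h x : F) : Prop :=
  exists i : nat, (i <= (#|F| - 3)./2)%N /\ x = h ^+ i.

Definition standing (h : F) (f : qform) : Prop :=
  primitive f /\ irreducible_form f /\ (~ exists c : F, disc f = c%:P) /\
  (sgn (disc f) = 1 \/ sgn (disc f) = h).

Definition partially_reduced (h : F) (f : qform) : Prop :=
  [/\ (absq (fB f) < absq (fA f))%N, (absq (fA f) <= absq (fC f))%N,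
      ((absq (fA f) < absq (fC f))%N -> sgn (fA f) = 1 \/ sgn (fA f) = h),
      (absq (fA f) = absq (fC f) -> sgn (fA f) = 1) &
      (fB f != 0 -> inS h (sgn (fB f)))].

End Forms.

(* Main.v *)
Require Import Defs.
From HB Require Import structures.
From mathcomp Require Import all_boot all_order all_algebra all_field.
From mathcomp Require Import zify ring lra.
Import GRing.Theory.
Local Open Scope ring_scope.

Section Aux.
Variable F : finFieldType.
Implicit Types (A B C x y H G : {poly F}).

Lemma absq_lt (H G : {poly F}) : (absq H < absq G)%N = (size H < size G)%N.
Proof.
rewrite /absq; have q1 := finNzRing_gt1 F.
case: (eqVneq H 0) => [->|nH]; case: (eqVneq G 0) => [->|nG]; rewrite ?size_poly0.
- by [].
- by rewrite expn_gt0 (ltn_trans _ q1) // size_poly_gt0 nG.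
- by rewrite ltn0.
- rewrite ltn_exp2l //; move: nH nG; rewrite -!size_poly_gt0.
  case: (size H) => // m _; case: (size G) => // n _.
Qed.

Lemma absq_eq H G : (absq H = absq G) <-> size H = size G.
Proof.
have h1 := absq_lt H G; have h2 := absq_lt G H.
split=> e.
  rewrite e ltnn in h1 h2.
  move/esym/negbT: h1; move/esym/negbT: h2; rewrite -!leqNgt => h1 h2.
  by apply: anti_leq; rewrite h1 h2.
rewrite e ltnn in h1 h2.
move/negbT: h1; move/negbT: h2; rewrite -!leqNgt => h1 h2.
by apply: anti_leq; rewrite h1 h2.
Qed.

Lemma size_sq x : size (x ^+ 2) = ((size x).*2).-1.
Proof.
case: (eqVneq x 0) => [->|nx]; first by rewrite expr0n /= size_poly0.
by rewrite expr2 size_mul // addnn.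
Qed.

Lemma size_eq_add (P R : {poly F}) : size P = size R -> lead_coef P + lead_coef R != 0 ->
  size (P + R) = size P.
Proof.
move=> e nz; apply/eqP; rewrite eqn_leq; apply/andP; split.
  by apply: leq_trans (size_polyD _ _) _; rewrite e maxnn.
case: (eqVneq P 0) => [P0|nP].
  by rewrite P0 size_poly0.
have sP : (0 < size P)%N by rewrite size_poly_gt0.
rewrite -(prednK sP).
rewrite ltnNge; apply/negP => le.
move: nz; rewrite /lead_coef -e -coefD (nth_default _ le) eqxx //.
Qed.

Hypothesis two_nz : (2%:R : F) != 0.

Lemma four_nz : (4%:R : F) != 0.
Proof. have -> : (4%:R : F) = 2%:R * 2%:R by rewrite -natrM. by rewrite mulf_neq0. Qed.

Lemma disc_size A B C : A != 0 -> C != 0 -> (size B < size A)%N ->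
  (size A <= size C)%N ->
  size (B ^+ 2 - 4%:R * A * C) = (size A + size C).-1 /\
  lead_coef (B ^+ 2 - 4%:R * A * C) = - 4%:R * lead_coef A * lead_coef C.
Proof.
move=> nA nC lBA lAC.
have e : 4%:R * A * C = (4%:R : F) *: (A * C) by rewrite -mulrA -polyC_natr mul_polyC.
have sAC : size (A * C) = (size A + size C).-1 by rewrite size_mul.
have s4 : size (- (4%:R * A * C)) = (size A + size C).-1.
  by rewrite size_polyN e size_scale ?four_nz.
have sB : (size (B ^+ 2) < size (- (4%:R * A * C)))%N.
  rewrite s4 size_sq; move: lBA lAC; lia.
rewrite addrC size_polyDl // lead_coefDl // s4; split => //.
by rewrite lead_coefN e lead_coefZ lead_coefM; ring.
Qed.

Lemma nocancel A B C x y : A != 0 -> C != 0 -> (size B < size A)%N ->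
  (size A <= size C)%N ->
  (imaginary (B ^+ 2 - 4%:R * A * C) \/ unusual (B ^+ 2 - 4%:R * A * C)) ->
  (x != 0) || (y != 0) ->
  size (A * x ^+ 2 + B * x * y + C * y ^+ 2) =
  maxn (size (A * x ^+ 2)) (size (C * y ^+ 2)).
Proof.
move=> nA nC lBA lAC hD nxy.
have [sD lD] := @disc_size A B C nA nC lBA lAC.
set P := A * x ^+ 2; set R := C * y ^+ 2; set Q := B * x * y.
have sPe : x != 0 -> size P = (size A + ((size x).*2).-1).-1.
  by move=> nx; rewrite /P size_mul ?expf_neq0 // size_sq.
have sRe : y != 0 -> size R = (size C + ((size y).*2).-1).-1.
  by move=> ny; rewrite /R size_mul ?expf_neq0 // size_sq.
have P0 : x = 0 -> P = 0 by move=> x0; rewrite /P x0 expr2 !mulr0.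
have R0 : y = 0 -> R = 0 by move=> y0; rewrite /R y0 expr2 !mulr0.
have nP : x != 0 -> P != 0 by move=> nx; rewrite /P mulf_neq0 // expf_neq0.
have nR : y != 0 -> R != 0 by move=> ny; rewrite /R mulf_neq0 // expf_neq0.
have sA : (0 < size A)%N by rewrite size_poly_gt0.
have sC : (0 < size C)%N by rewrite size_poly_gt0.
have sPR : size (P + R) = maxn (size P) (size R).
  case: (ltngtP (size P) (size R)) => hPR.
  - rewrite addrC size_polyDl //; symmetry; apply/maxn_idPr; exact: ltnW.
  - rewrite size_polyDl //; apply/esym/maxn_idPl; exact: ltnW.
  - rewrite size_eq_add // ?hPR ?maxnn //.
    have nx : x != 0.
      apply/negP => /eqP x0; move: hPR; rewrite (P0 x0) size_poly0.
      case: (eqVneq y 0) => [y0|ny]; first by move: nxy; rewrite x0 y0 eqxx.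
      by move/esym/eqP; rewrite size_poly_eq0 (negbTE (nR ny)).
    have ny : y != 0.
      apply/negP => /eqP y0; move: hPR; rewrite (R0 y0) size_poly0.
      by move/eqP; rewrite size_poly_eq0 (negbTE (nP nx)).
    have sx : (0 < size x)%N by rewrite size_poly_gt0.
    have sy : (0 < size y)%N by rewrite size_poly_gt0.
    rewrite (sPe nx) (sRe ny) in hPR.
    have lxn : lead_coef x != 0 by rewrite lead_coef_eq0.
    rewrite /P /R !lead_coefM -!expr2.
    case: hD => [hi|[_ [_ nsq]]].
      exfalso; move: hi; rewrite /imaginary sD.
      rewrite (_ : ((size A + size C).-1.-1 = 2 * (size C + size y - size x - 1))%N).
        by rewrite oddM.
      move: hPR; rewrite -!addnn; lia.
    apply/negP => /eqP e; apply: nsq; rewrite /sgn lD.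
    move/eqP: e; rewrite addr_eq0 => /eqP e.
    have eA : lead_coef A = - (lead_coef C * lead_coef y ^+ 2) / lead_coef x ^+ 2.
      by rewrite -e mulfK // expf_neq0.
    exists (2%:R * lead_coef C * lead_coef y / lead_coef x).
    rewrite eA; field; done.
have sQ : (size Q < size (P + R)%R)%N.
  rewrite sPR; case: (eqVneq x 0) => [x0|nx].
    rewrite /Q x0 mulr0 mul0r size_poly0.
    case: (eqVneq y 0) => [y0|ny]; first by move: nxy; rewrite x0 y0 eqxx.
    by rewrite leq_max !size_poly_gt0 nR ?orbT.
  case: (eqVneq y 0) => [y0|ny].
    by rewrite /Q y0 mulr0 size_poly0 leq_max !size_poly_gt0 nP.
  have sx : (0 < size x)%N by rewrite size_poly_gt0.
  have sy : (0 < size y)%N by rewrite size_poly_gt0.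
  have h1 := size_polyMleq (B * x) y; have h2 := size_polyMleq B x.
  rewrite /Q (sPe nx) (sRe ny); move: h1 h2 lBA lAC sA sC sx sy.
  rewrite -!addnn; lia.
by rewrite -addrA [Q + R]addrC addrA size_polyDl.
Qed.

End Aux.
Lemma det2 (R : comNzRingType) (M : 'M[R]_2) :
  \det M = M ord0 ord0 * M ord_max ord_max - M ord0 ord_max * M ord_max ord0.
Proof.
rewrite (expand_det_row _ ord0) !big_ord_recl big_ord0 addr0 /cofactor !det_mx11.
rewrite !mxE /=.
have e1 : lift ord0 (0 : 'I_1) = ord_max :> 'I_2 by apply: val_inj.
have e2 : lift ord0 (ord0 : 'I_1) = ord_max :> 'I_2 by apply: val_inj.
have e3 : lift (ord_max : 'I_2) (0 : 'I_1) = ord0 :> 'I_2 by apply: val_inj.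
rewrite ?e1 ?e2 ?e3 /=. ring.
Qed.

Section Aux2.
Variable F : finFieldType.

Lemma two_nz : coprime #|F| 6 -> (2%:R : F) != 0.
Proof.
move=> cop; apply/negP => /eqP e2.
have ch : 2%N \in [pchar F] by apply/andP; split => //; apply/eqP.
have [n eF] : exists n, #|F| = (2 ^ n)%N by eexists; exact: card_pprimeChar ch.
have n0 : (0 < n)%N.
  case: n eF => // eF; have := finNzRing_gt1 F; by rewrite eF.
by move: cop; rewrite eF coprime_pexpl.
Qed.

Lemma odd_card : coprime #|F| 6 -> odd #|F|.
Proof. by move=> cop; rewrite -coprimen2; apply: coprime_dvdr cop. Qed.

Lemma h_nz (h : F) : primitive_root_F h -> h != 0.
Proof.
move=> ph; apply/negP => /eqP h0; have := prim_expr_order ph.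
have q1 := finNzRing_gt1 F.
have k0 : (#|F|.-1 == 0)%N = false by case: #|F| q1 => [|[|]].
rewrite h0 expr0n k0 => /eqP; by rewrite eq_sym oner_eq0.
Qed.

Lemma h_nsq (h : F) : coprime #|F| 6 -> primitive_root_F h -> ~ is_square h.
Proof.
move=> cop ph [y hy].
have oq := odd_card cop; have q1 := finNzRing_gt1 F.
have yn : y != 0 by apply/negP => /eqP y0; move: (@h_nz h ph); rewrite -hy y0 expr2 mulr0 eqxx.
have yq : y ^+ #|F|.-1 = 1.
  apply: (mulIf yn); rewrite mul1r -exprSr prednK ?expf_card //; exact: ltnW.
have ev : odd #|F|.-1 = false.
  by move: oq; case: #|F| q1 => [|n] //= _ /negbTE.
have k2 : (#|F|.-1 = 2 * (#|F|.-1)./2)%N.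
  by rewrite -{1}(odd_double_half #|F|.-1) ev add0n -muln2 mulnC.
have := prim_order_dvd ph (#|F|.-1)./2.
rewrite -hy -exprM -k2 yq eqxx => /dvdn_leq.
move: k2 q1; set m := (#|F|.-1)./2; move=> k2 q1 H.
have m0 : (0 < m)%N by move: k2 q1; case: #|F| => [|[|[|q]]] //=; lia.
by have := H m0; lia.
Qed.
End Aux2.

Section Aux3.
Variable F : finFieldType.
Implicit Types (A B C x y X Y Z : {poly F}).

Lemma S_neg (h x : F) : coprime #|F| 6 -> primitive_root_F h -> x != 0 ->
  inS h x -> inS h (- x) -> False.
Proof.
move=> cop ph nx [i [hi ei]] [j [hj ej]].
have q1 := finNzRing_gt1 F; have oq := @odd_card F cop.
have e : h ^+ (2 * i) == h ^+ (2 * j).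
  by rewrite mulnC exprM -ei mulnC exprM -ej sqrrN.
rewrite (eq_prim_root_expr ph) !modn_small in e; first last.
- move: hi hj q1; rewrite -!divn2; move: (#|F|) => q; lia.
- move: hi hj q1; rewrite -!divn2; move: (#|F|) => q; lia.
have ij : i = j by move: e; rewrite eqn_mul2l /= => /eqP.
move: ej; rewrite -ij -ei => /eqP; rewrite eq_sym -addr_eq0 -mulr2n -mulr_natl.
by rewrite mulf_eq0 (negbTE (@two_nz F cop)) (negbTE nx).
Qed.

Lemma disc_compose (f : qform F) (M : 'M[{poly F}]_2) :
  disc (compose f M) = (\det M) ^+ 2 * disc f.
Proof. rewrite det2 /disc /compose /fA /fB /fC /=; ring. Qed.

Lemma sq_bound X y : X != 0 -> (size (X * y ^+ 2)%R <= size X)%N -> (size y <= 1)%N.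
Proof.
move=> nX; case: (eqVneq y 0) => [->|ny]; first by rewrite size_poly0.
rewrite size_mul ?expf_neq0 // size_sq.
have sX : (0 < size X)%N by rewrite size_poly_gt0.
have sy : (0 < size y)%N by rewrite size_poly_gt0.
rewrite -addnn; set a := size X in sX *; set b := size y in sy *; clearbody a b; lia.
Qed.

Lemma coef_formA X Y Z (a c : F) n :
  (X * a%:P ^+ 2 + Y * a%:P * c%:P + Z * c%:P ^+ 2)`_n =
  X`_n * a ^+ 2 + Y`_n * a * c + Z`_n * c ^+ 2.
Proof. by rewrite !coefD -!(rmorphXn polyC) !coefMC. Qed.

Lemma coef_formB X Y Z (a b c d : F) n :
  (2%:R * X * a%:P * b%:P + Y * (a%:P * d%:P + b%:P * c%:P) + 2%:R * Z * c%:P * d%:P)`_n =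
  2%:R * X`_n * a * b + Y`_n * (a * d + b * c) + 2%:R * Z`_n * c * d.
Proof. by rewrite !coefD -!polyCM -polyCD !coefMC -!polyC_natr !coefCM. Qed.

End Aux3.

Section Aux4.
Variable F : finFieldType.
Implicit Types (A B C X : {poly F}).

Lemma size_Ck X (c : F) : c != 0 -> size (X * c%:P ^+ 2) = size X.
Proof. by move=> cn; rewrite -rmorphXn mulrC mul_polyC size_scale // expf_neq0. Qed.

Lemma sgnC_h (h : F) A B C : coprime #|F| 6 -> A != 0 -> C != 0 ->
  (size B < size A)%N -> size A = size C ->
  (sgn (B ^+ 2 - 4%:R * A * C) = 1 \/ sgn (B ^+ 2 - 4%:R * A * C) = h) ->
  (imaginary (B ^+ 2 - 4%:R * A * C) \/ unusual (B ^+ 2 - 4%:R * A * C)) ->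
  - 4%:R * lead_coef A * lead_coef C = h.
Proof.
move=> cop nA nC lBA eAC sg hD.
have lAC : (size A <= size C)%N by rewrite eAC.
have [sD lD] := @disc_size F (@two_nz F cop) A B C nA nC lBA lAC.
have sC : (0 < size C)%N by rewrite size_poly_gt0.
case: hD => [hi|[_ [_ nsq]]].
  exfalso; move: hi; rewrite /imaginary sD eAC.
  have -> : ((size C + size C).-1.-1 = 2 * (size C).-1)%N.
    by set s := size C in sC *; clearbody s; lia.
  by rewrite oddM.
case: sg => e; last by rewrite /sgn lD in e.
by exfalso; apply: nsq; rewrite e; exists 1; rewrite expr1n.
Qed.

Lemma mx2_entries (M : 'M[{poly F}]_2) :
  M = mx2 (M ord0 ord0) (M ord0 ord_max) (M ord_max ord0) (M ord_max ord_max).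
Proof.
apply/matrixP => i j; rewrite !mxE.
case: i => [[|[|i]] Hi] //; case: j => [[|[|j]] Hj] //=.
- by congr (M _ _); apply: val_inj.
- by congr (M _ _); apply: val_inj.
- by congr (M _ _); apply: val_inj.
- by congr (M _ _); apply: val_inj.
Qed.

Lemma compose_mx2 (A B C a b c d : {poly F}) :
  compose (A, B, C) (mx2 a b c d) =
  (A * a ^+ 2 + B * a * c + C * c ^+ 2,
   2%:R * A * a * b + B * (a * d + b * c) + 2%:R * C * c * d,
   A * b ^+ 2 + B * b * d + C * d ^+ 2).
Proof. by rewrite /compose !mxE. Qed.

Lemma det_mx2 (a b c d : {poly F}) : \det (mx2 a b c d) = a * d - b * c.
Proof. by rewrite det2 !mxE. Qed.

End Aux4.

Lemma arith1 (u v u' v' w1 w2 : nat) : (v <= w2)%N -> (u + v = u' + v')%N ->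
  (u <= v)%N -> (u' <= v')%N -> u' = maxn w1 w2 -> u = v.
Proof. lia. Qed.

Lemma size_mul_sq_ge (F : finFieldType) (X y : {poly F}) : X != 0 -> y != 0 ->
  (size X <= size (X * y ^+ 2)%R)%N.
Proof.
move=> nX ny; rewrite size_mul ?expf_neq0 // size_sq.
have sX : (0 < size X)%N by rewrite size_poly_gt0.
have sy : (0 < size y)%N by rewrite size_poly_gt0.
rewrite -addnn; set a := size X in sX *; set b := size y in sy *; clearbody a b; lia.
Qed.

Lemma arith2 (u v u' v' w : nat) : u' = maxn u 0 -> v' = maxn w v -> (u < v)%N -> u' = v' -> False.
Proof. lia. Qed.

Lemma unit_const (F : finFieldType) (a d : {poly F}) (c : F) : c != 0 -> a * d = c%:P ->
  exists a0 d0 : F, [/\ a = a0%:P, d = d0%:P, a0 != 0 & d0 != 0].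
Proof.
move=> cn e.
have na : a != 0 by apply/negP => /eqP a0; move: e; rewrite a0 mul0r => /esym/eqP; rewrite polyC_eq0 (negbTE cn).
have nd : d != 0 by apply/negP => /eqP d0; move: e; rewrite d0 mulr0 => /esym/eqP; rewrite polyC_eq0 (negbTE cn).
have s : size (a * d) = 1%N by rewrite e size_polyC cn.
rewrite size_mul // in s.
have sa : (0 < size a)%N by rewrite size_poly_gt0.
have sd : (0 < size d)%N by rewrite size_poly_gt0.
have sa1 : (size a <= 1)%N by move: s sa sd; set u := size a; set v := size d; clearbody u v; lia.
have sd1 : (size d <= 1)%N by move: s sa sd; set u := size a; set v := size d; clearbody u v; lia.
exists a`_0, d`_0; split.
- exact: size1_polyC.
- exact: size1_polyC.
- by apply: contra na => /eqP z; rewrite (size1_polyC sa1) z.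
- by apply: contra nd => /eqP z; rewrite (size1_polyC sd1) z.
Qed.

Lemma sq_one (F : finFieldType) (h x s s' : F) : ~ is_square h -> h != 0 ->
  (s = 1 \/ s = h) -> (s' = 1 \/ s' = h) -> s' = x ^+ 2 * s -> x ^+ 2 = 1.
Proof.
move=> nsq hn [->|->] [->|->] e.
- by rewrite e mulr1.
- by exfalso; apply: nsq; exists x; rewrite e mulr1.
- have xn : x != 0 by apply/negP => /eqP x0; move: e; rewrite x0 expr0n /= mul0r => /eqP; rewrite oner_eq0.
  exfalso; apply: nsq; exists x^-1; rewrite exprVn.
  by apply: (mulIf (expf_neq0 2 xn)); rewrite mulVf ?expf_neq0 // mulrC -e.
- by apply: (mulIf hn); rewrite -e mul1r.
Qed.

Lemma alg3 (F : fieldType) (a b c0 d c s h : F) : s != 0 -> (2%:R : F) != 0 ->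
  h = - 4%:R * s -> c ^+ 2 = 1 ->
  a ^+ 2 + s * c0 ^+ 2 = 1 -> 2%:R * a * b + 2%:R * s * c0 * d = 0 ->
  b ^+ 2 + s * d ^+ 2 = s -> a * d - b * c0 = c ->
  [/\ c0 = 4%:R * c * b / h, d = c * a & a ^+ 2 - (4%:R / h) * b ^+ 2 = 1].
Proof.
move=> sn tn hh c2 E1 E2 E3 ed.
have fn : (4%:R : F) != 0.
  have -> : (4%:R : F) = 2%:R * 2%:R by rewrite -natrM.
  by rewrite mulf_neq0.
have e2 : a * b + s * c0 * d = 0.
  have : 2%:R * (a * b + s * c0 * d) = 0 by rewrite -E2; ring.
  by move/eqP; rewrite mulf_eq0 (negbTE tn) => /eqP.
have e1 : a ^+ 2 + s * c0 ^+ 2 - 1 = 0 by rewrite E1 subrr.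
have e3 : b ^+ 2 + s * d ^+ 2 - s = 0 by rewrite E3 subrr.
have ec0 : c0 = - (c * b) / s.
  have : c * b + s * c0 = 0.
    have -> : c * b + s * c0 = d * (a * b + s * c0 * d) - c0 * (b ^+ 2 + s * d ^+ 2 - s).
      by rewrite -ed; ring.
    by rewrite e2 e3 mulr0 mulr0 subrr.
  move/eqP; rewrite addrC addr_eq0 => /eqP e.
  by rewrite -[c0](mulKf sn) e mulrC.
split.
- by rewrite ec0 hh; field; rewrite sn oppr_eq0 fn.
- apply/eqP; rewrite -subr_eq0.
  have -> : d - c * a = - (d * (a ^+ 2 + s * c0 ^+ 2 - 1) - c0 * (a * b + s * c0 * d)).
    by rewrite -ed; ring.
  by rewrite e1 e2 mulr0 mulr0 subrr oppr0.
- have cb2 : (c * b) ^+ 2 = b ^+ 2 by rewrite exprMn c2 mul1r.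
  by rewrite -[RHS]E1 ec0 mulNr sqrrN expr_div_n cb2 hh; field; rewrite sn oppr_eq0 fn.
Qed.

Lemma size_ge_mul (F : finFieldType) (X Y : {poly F}) : X != 0 -> Y != 0 ->
  (size X <= size (X * Y)%R)%N.
Proof.
move=> nX nY; rewrite size_mul //.
have sX : (0 < size X)%N by rewrite size_poly_gt0.
have sY : (0 < size Y)%N by rewrite size_poly_gt0.
set a := size X in sX *; set b := size Y in sY *; clearbody a b; lia.
Qed.

Lemma arith3 (u v u' v' : nat) : (u + v = u' + v')%N -> u = v -> u' = v' -> u' = u.
Proof. lia. Qed.

Theorem mainTheorem4 (F : finFieldType) (h : F) (f f' : qform F) :
  coprime #|F| 6 ->
  primitive_root_F h ->
  standing h f -> standing h f' ->
  partially_reduced h f -> partially_reduced h f' ->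
  (imaginary (disc f) \/ unusual (disc f)) ->
  (imaginary (disc f') \/ unusual (disc f')) ->
  disc f = disc f' ->
  [/\
   ((absq (fA f) < absq (fC f))%N -> (absq (fA f') < absq (fC f'))%N ->
      (equivalent f f' <-> f = f')),
   ((absq (fA f) < absq (fC f))%N -> absq (fA f') = absq (fC f') ->
      ~ equivalent f f') &
   (absq (fA f) = absq (fC f) -> absq (fA f') = absq (fC f') ->
      forall M : 'M[{poly F}]_2,
        (inGL2 M /\ f' = compose f M) <->
        (exists alpha beta u : F,
           [/\ M = mx2 alpha%:P beta%:P (4%:R * u * beta / h)%:P (u * alpha)%:P,
               alpha ^+ 2 - (4%:R / h) * beta ^+ 2 = 1,
               \det M = u%:P,
               (u = 1 \/ u = -1) &
               f' = compose f M]))].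
Proof.
move: f f' => [[A B] C] [[A' B'] C'].
move=> cop ph [_ [_ [_ sgD]]] [_ [_ [_ sgD']]] [lBA lAC ltA eqA Sb]
  [lBA' lAC' ltA' eqA' Sb'] hD hD' eD.
rewrite /disc /fA /fB /fC /= in sgD sgD' hD hD' eD lBA lAC ltA eqA Sb lBA' lAC' ltA' eqA' Sb' *.
have two := @two_nz F cop.
rewrite absq_lt in lBA; rewrite absq_lt in lBA'.
rewrite leqNgt absq_lt -leqNgt in lAC.
rewrite leqNgt absq_lt -leqNgt in lAC'.
have nA : A != 0 by rewrite -size_poly_gt0 (leq_ltn_trans (leq0n _) lBA).
have nA' : A' != 0 by rewrite -size_poly_gt0 (leq_ltn_trans (leq0n _) lBA').
have nC : C != 0 by rewrite -size_poly_gt0 (leq_trans _ lAC) // size_poly_gt0.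
have nC' : C' != 0 by rewrite -size_poly_gt0 (leq_trans _ lAC') // size_poly_gt0.
have [sD lD] := @disc_size F two A B C nA nC lBA lAC.
have [sD' lD'] := @disc_size F two A' B' C' nA' nC' lBA' lAC'.
have nD : B ^+ 2 - 4%:R * A * C != 0.
  rewrite -size_poly_gt0 sD.
  have := size_poly_gt0 A; have := size_poly_gt0 C; rewrite nA nC.
  by set u := size A; set v := size C; clearbody u v; lia.
have hsum : (size A + size C = size A' + size C')%N.
  move: sD'; rewrite -eD sD.
  have := size_poly_gt0 A; have := size_poly_gt0 C; rewrite nA nC.
  have := size_poly_gt0 A'; have := size_poly_gt0 C'; rewrite nA' nC'.
  set u := size A; set v := size C; set u' := size A'; set v' := size C'.
  by clearbody u v u' v'; lia.
have key : forall a b c0 d (c : F), c != 0 -> a * d - b * c0 = c%:P ->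
  A' = A * a ^+ 2 + B * a * c0 + C * c0 ^+ 2 ->
  B' = 2%:R * A * a * b + B * (a * d + b * c0) + 2%:R * C * c0 * d ->
  C' = A * b ^+ 2 + B * b * d + C * d ^+ 2 ->
  [/\ c ^+ 2 = 1, size A' = maxn (size (A * a ^+ 2)) (size (C * c0 ^+ 2)),
      size C' = maxn (size (A * b ^+ 2)) (size (C * d ^+ 2)) &
      (c0 != 0 -> size A = size C)].
  move=> a b c0 d c cnz edet eA eB eC.
  have ed : B' ^+ 2 - 4%:R * A' * C' = (c%:P) ^+ 2 * (B ^+ 2 - 4%:R * A * C).
    by rewrite eA eB eC -edet; ring.
  have c2 : c ^+ 2 = 1.
    have e0 : ((c ^+ 2)%:P - 1) * (B ^+ 2 - 4%:R * A * C) = 0.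
      by rewrite mulrBl rmorphXn -ed -eD mul1r subrr.
    move/eqP: e0; rewrite mulf_eq0 (negbTE nD) orbF -polyC1 -polyCB polyC_eq0 subr_eq0.
    by move/eqP.
  have nxy1 : (a != 0) || (c0 != 0).
    case: (eqVneq a 0) => [a0|//]; case: (eqVneq c0 0) => [c00|]; last by rewrite orbT.
    move: edet.
    rewrite a0 c00 mul0r mulr0 subr0 => /esym/eqP; rewrite polyC_eq0.
    by rewrite (negbTE cnz).
  have nxy2 : (b != 0) || (d != 0).
    case: (eqVneq b 0) => [b0|//]; case: (eqVneq d 0) => [d0|]; last by rewrite orbT.
    move: edet.
    rewrite b0 d0 mul0r mulr0 subr0 => /esym/eqP; rewrite polyC_eq0.
    by rewrite (negbTE cnz).
  have sA' : size A' = maxn (size (A * a ^+ 2)) (size (C * c0 ^+ 2)).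
    by rewrite eA; apply: (@nocancel F two).
  have sC' : size C' = maxn (size (A * b ^+ 2)) (size (C * d ^+ 2)).
    by rewrite eC; apply: (@nocancel F two).
  split => // nc0.
  have s1 := @size_mul_sq_ge F C c0 nC nc0.
  exact: (@arith1 _ _ _ _ _ _ s1 hsum lAC lAC' sA').
have gen : forall M, inGL2 M -> (A', B', C') = compose (A, B, C) M ->
  exists a b c0 d (c : F), [/\ M = mx2 a b c0 d, c != 0, a * d - b * c0 = c%:P &
     [/\ A' = A * a ^+ 2 + B * a * c0 + C * c0 ^+ 2,
      B' = 2%:R * A * a * b + B * (a * d + b * c0) + 2%:R * C * c0 * d &
      C' = A * b ^+ 2 + B * b * d + C * d ^+ 2]].
  move=> M [c [cnz dM]] eM.
  rewrite (@mx2_entries F M) det_mx2 in dM; rewrite (@mx2_entries F M) compose_mx2 in eM.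
  case: eM => eA eB eC.
  exists (M ord0 ord0), (M ord0 ord_max), (M ord_max ord0), (M ord_max ord_max), c.
  by split => //; exact: mx2_entries.
have gA : forall a (a0 : F), a = a0%:P -> a0 != 0 -> size (A * a ^+ 2) = size A.
  by move=> a a0 -> an; rewrite size_Ck.
have gC : forall a (a0 : F), a = a0%:P -> a0 != 0 -> size (C * a ^+ 2) = size C.
  by move=> a a0 -> an; rewrite size_Ck.
split.
- move=> ltAC ltAC'; split.
  + move=> [M [GM eM]].
    have [a [b [c0 [d [c [_ cnz edet [eA eB eC]]]]]]] := gen M GM eM.
    have [c2 sA' sC' L] := key a b c0 d c cnz edet eA eB eC.
    have ltAC0 := ltAC; rewrite absq_lt in ltAC0.
    have c00 : c0 = 0.
      by case: (eqVneq c0 0) => // nc0; move: ltAC0; rewrite (L nc0) ltnn.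
    rewrite c00 mulr0 subr0 in edet.
    have [a0 [d0 [ea ed an dn]]] := @unit_const F _ _ _ cnz edet.
    rewrite c00 (expr2 (0 : {poly F})) !mulr0 size_poly0 (gA _ _ ea an) in sA'.
    have sAA : size A' = size A by rewrite sA' maxn0.
    have eA1 : A' = (a0 ^+ 2) *: A.
      by rewrite eA c00 ea (expr2 (0 : {poly F})) !mulr0 !addr0 -rmorphXn mulrC mul_polyC.
    have a2 : a0 ^+ 2 = 1.
      apply: (@sq_one F h a0 (sgn A) (sgn A') (@h_nsq F h cop ph) (@h_nz F h ph) (ltA ltAC) (ltA' ltAC')).
      by rewrite /sgn eA1 lead_coefZ.
    have b0 : b = 0.
      case: (eqVneq b 0) => // nb; exfalso.
      have eB1 : B' = ((2%:R * a0) *: A) * b + B * (a0 * d0)%:P.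
        by rewrite eB c00 ea ed -mul_polyC !polyCM polyC_natr; ring.
      have nk : (2%:R * a0) *: A != 0 by rewrite scaler_eq0 negb_or mulf_neq0.
      have sP := @size_ge_mul F _ _ nk nb.
      rewrite size_scale ?mulf_neq0 // in sP.
      have sQ : (size (B * (a0 * d0)%:P)%R <= size B)%N.
        by rewrite mulrC mul_polyC size_scale_leq.
      have sBP := size_polyDl (leq_ltn_trans sQ (leq_trans lBA sP)).
      move: lBA'; rewrite eB1 sBP sAA => lt.
      by move: (leq_trans lt sP); rewrite ltnn.
    have ac : a0 * d0 = c by apply: polyC_inj; rewrite polyCM -ea -ed.
    have d2 : d0 ^+ 2 = 1 by rewrite -c2 -ac exprMn a2 mul1r.
    have eA' : A' = A by rewrite eA1 a2 scale1r.
    have eC' : C' = C.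
      by rewrite eC b0 ed (expr2 (0 : {poly F})) !mulr0 !mul0r !add0r -rmorphXn d2 mulr1.
    have eB' : B' = c *: B.
      by rewrite eB b0 c00 edet !mulr0 !mul0r !addr0 !add0r mulrC mul_polyC.
    move/eqP: c2; rewrite sqrf_eq1 => /orP [/eqP c1|/eqP c1].
      by rewrite eA' eC' eB' c1 scale1r.
    case: (eqVneq B 0) => [B0|nB].
      by rewrite eA' eC' eB' B0 scaler0.
    exfalso.
    have nB' : B' != 0 by rewrite eB' c1 scaleN1r oppr_eq0.
    have e' : sgn B' = - sgn B by rewrite /sgn eB' c1 scaleN1r lead_coefN.
    have Sx := Sb nB; have Sy := Sb' nB'; rewrite e' in Sy.
    by apply: (@S_neg F h (sgn B) cop ph _ Sx Sy); rewrite /sgn lead_coef_eq0.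
  + move=> <-; exists (mx2 1 0 0 1); split.
      exists 1; split; first exact: oner_neq0.
      by rewrite det_mx2 mulr1 mulr0 subr0 polyC1.
    rewrite compose_mx2; congr (_, _, _); ring.
- move=> ltAC eqAC' [M [GM eM]].
  have [a [b [c0 [d [c [_ cnz edet [eA eB eC]]]]]]] := gen M GM eM.
  have [c2 sA' sC' L] := key a b c0 d c cnz edet eA eB eC.
  rewrite absq_lt in ltAC; move/absq_eq: eqAC' => eqAC'.
  have c00 : c0 = 0.
    by case: (eqVneq c0 0) => // nc0; move: ltAC; rewrite (L nc0) ltnn.
  rewrite c00 mulr0 subr0 in edet.
  have [a0 [d0 [ea ed an dn]]] := @unit_const F _ _ _ cnz edet.
  rewrite c00 (expr2 (0 : {poly F})) !mulr0 size_poly0 (gA _ _ ea an) in sA'.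
  rewrite (gC _ _ ed dn) in sC'.
  exact: (@arith2 _ _ _ _ _ sA' sC' ltAC eqAC').
- move=> eqAC eqAC' M; split.
  + move=> [GM eM].
    have [a [b [c0 [d [c [eMx cnz edet [eA eB eC]]]]]]] := gen M GM eM.
    have [c2 sA' sC' _] := key a b c0 d c cnz edet eA eB eC.
    have lA1 := eqA eqAC; have lA1' := eqA' eqAC'.
    move/absq_eq: eqAC => eAC; move/absq_eq: eqAC' => eAC'.
    have e1 : size A' = size A := @arith3 _ _ _ _ hsum eAC eAC'.
    have m1 := leq_maxl (size (A * a ^+ 2)) (size (C * c0 ^+ 2)).
    rewrite -sA' e1 in m1.
    have m2 := leq_maxr (size (A * a ^+ 2)) (size (C * c0 ^+ 2)).
    rewrite -sA' e1 eAC in m2.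
    have m3 := leq_maxl (size (A * b ^+ 2)) (size (C * d ^+ 2)).
    rewrite -sC' -eAC' e1 in m3.
    have m4 := leq_maxr (size (A * b ^+ 2)) (size (C * d ^+ 2)).
    rewrite -sC' -eAC' e1 eAC in m4.
    have [a0 ea] : exists a0, a = a0%:P by exists a`_0; exact: size1_polyC (@sq_bound F _ _ nA m1).
    have [c1 ec] : exists c1, c0 = c1%:P by exists c0`_0; exact: size1_polyC (@sq_bound F _ _ nC m2).
    have [b0 eb] : exists b0, b = b0%:P by exists b`_0; exact: size1_polyC (@sq_bound F _ _ nA m3).
    have [d0 ed] : exists d0, d = d0%:P by exists d`_0; exact: size1_polyC (@sq_bound F _ _ nC m4).
    rewrite ea eb ec ed in eA eB eC edet eMx.
    have sA0 : (0 < size A)%N by rewrite size_poly_gt0.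
    set n := (size A).-1.
    have hA : A`_n = 1 by exact: lA1.
    have hC : C`_n = lead_coef C by rewrite /lead_coef -eAC.
    have hB : B`_n = 0 by apply: nth_default; rewrite /n -ltnS prednK.
    have hA' : A'`_n = 1 by rewrite /n -e1; exact: lA1'.
    have hC' : C'`_n = lead_coef C' by rewrite /lead_coef -eAC' e1.
    have hB' : B'`_n = 0 by apply: nth_default; rewrite /n -e1 -ltnS prednK // e1.
    have X1 := congr1 (fun p : {poly F} => p`_n) eA; rewrite /= coef_formA hA hB hC hA' in X1.
    have X2 := congr1 (fun p : {poly F} => p`_n) eB; rewrite /= coef_formB hA hB hC hB' in X2.
    have X3 := congr1 (fun p : {poly F} => p`_n) eC; rewrite /= coef_formA hA hB hC hC' in X3.
    have gh := @sgnC_h F h A B C cop nA nC lBA eAC sgD hD.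
    have gh' := @sgnC_h F h A' B' C' cop nA' nC' lBA' eAC' sgD' hD'.
    rewrite /sgn in lA1 lA1'.
    rewrite lA1 mulr1 in gh; rewrite lA1' mulr1 in gh'.
    have eCC : lead_coef C' = lead_coef C.
      apply: (mulfI (_ : - 4%:R != 0)); first by rewrite oppr_eq0 four_nz.
      by rewrite gh gh'.
    have sn : lead_coef C != 0 by rewrite lead_coef_eq0.
    have E1 : a0 ^+ 2 + lead_coef C * c1 ^+ 2 = 1 by rewrite X1; ring.
    have E2 : 2%:R * a0 * b0 + 2%:R * lead_coef C * c1 * d0 = 0 by rewrite X2; ring.
    have E3 : b0 ^+ 2 + lead_coef C * d0 ^+ 2 = lead_coef C by rewrite -[RHS]eCC X3; ring.
    have edet' : a0 * d0 - b0 * c1 = c.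
      by apply: polyC_inj; rewrite polyCB !polyCM.
    have [ec0 ed0 eal] := @alg3 _ a0 b0 c1 d0 c (lead_coef C) h sn two (esym gh) c2 E1 E2 E3 edet'.
    exists a0, b0, c; split.
    * by rewrite eMx ec0 ed0.
    * exact: eal.
    * by rewrite eMx det_mx2 -!polyCM -polyCB edet'.
    * by move/eqP: c2; rewrite sqrf_eq1 => /orP [/eqP|/eqP]; [left|right].
    * exact: eM.
  + move=> [al [be [u [eMx eal dM u1 ef]]]]; split => //.
    exists u; split => //.
    by case: u1 => ->; rewrite ?oppr_eq0 oner_eq0.
Qed.
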